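(* Let $\mathcal C=\mathcal C(I,A,(\rho_i)_{i\in I},(C^a)_{a\in A})$ be a connected Cartan scheme and $\mathcal R=\mathcal R(\mathcal C,(R^a)_{a\in A})$ a root system of type $\mathcal C$. Let $a\in A$ and $i,j\in I$ with $m^a_{i,j}=3$. Then $c^{\rho_i(a)}_{il}+c^{\rho_i(a)}_{jl}=c^{\rho_i\rho_j(a)}_{il}+c^{\rho_i\rho_j(a)}_{jl}$ for all $l\in I$.
   Context: Let $I$ be a nonempty finite set and $\{\alpha_i\mid i\in I\}$ the standard basis of $\mathbb Z^I$; $\mathbb N_0=\{0,1,2,\dots\}$. A generalized Cartan matrix is $C=(c_{ij})_{i,j\in I}\in\mathbb Z^{I\times I}$ with $c_{ii}=2$, $c_{jk}\le0$ for $j\ne k$, and $c_{ij}=0\Rightarrow c_{ji}=0$. A Cartan scheme $\mathcal C=\mathcal C(I,A,(\rho_i)_{i\in I},(C^a)_{a\in A})$ consists of a nonempty set $A$, maps $\rho_i:A\to A$ and generalized Cartan matrices $C^a=(c^a_{jk})_{j,k\in I}$ such that (C1) $\rho_i^2=\mathrm{id}$ and (C2) $c^a_{ij}=c^{\rho_i(a)}_{ij}$ for all $a\in A$, $i,j\in I$. It is connected if the group generated by the $\rho_i$ acts transitively on $A$. For $i\in I$, $a\in A$ let $\sigma_i^a\in\mathrm{Aut}(\mathbb Z^I)$, $\sigma_i^a(\alpha_j)=\alpha_j-c^a_{ij}\alpha_i$. A root system of type $\mathcal C$ is a family $\mathcal R=\mathcal R(\mathcal C,(R^a)_{a\in A})$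 of subsets $R^a\subset\mathbb Z^I$ such that, writing $R^a_+=R^a\cap\mathbb N_0^I$ and $m^a_{i,j}=|R^a\cap(\mathbb N_0\alpha_i+\mathbb N_0\alpha_j)|$, for all $a\in A$, $i,j\in I$: (R1) $R^a=R^a_+\cup(-R^a_+)$; (R2) $R^a\cap\mathbb Z\alpha_i=\{\alpha_i,-\alpha_i\}$; (R3) $\sigma_i^a(R^a)=R^{\rho_i(a)}$; (R4) if $i\neq j$ and $m^a_{i,j}$ is finite then $(\rho_i\rho_j)^{m^a_{i,j}}(a)=a$. *)

(* Defs.v *)
From mathcomp Require Import all_boot all_order all_algebra.
Set Implicit Arguments. Unset Strict Implicit. Unset Printing Implicit Defensive.
Import Order.TTheory GRing.Theory Num.Theory.
Local Open Scope ring_scope.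

(* Z^I is represented by {ffun I -> int}; alpha i is the standard basis vector. *)
Definition alpha (I : finType) (i : I) : {ffun I -> int} :=
  [ffun k => ((k == i) : nat)%:Z].

Definition vopp (I : finType) (v : {ffun I -> int}) : {ffun I -> int} :=
  [ffun k => - v k].

Definition nonneg_vec (I : finType) (v : {ffun I -> int}) : Prop :=
  forall k, 0 <= v k.

Definition is_gcm (I : finType) (c : I -> I -> int) : Prop :=
  (forall i, c i i = 2) /\
  (forall j k, j != k -> c j k <= 0) /\
  (forall i j, c i j = 0 -> c j i = 0).

Definition cartan_scheme (I : finType) (A : Type) (rho : I -> A -> A)
    (C : A -> I -> I -> int) : Prop :=
  (0 < #|I|)%N /\ inhabited A /\
  (forall a, is_gcm (C a)) /\
  (forall i a, rho i (rho i a) = a) /\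
  (forall a i j, C a i j = C (rho i a) i j).

Definition rho_word (I : finType) (A : Type) (rho : I -> A -> A)
    (w : seq I) (a : A) : A := foldr (fun i b => rho i b) a w.

(* connected: the group generated by the rho_i acts transitively on A
   (the rho_i are involutions, so this group consists of the words). *)
Definition connected_scheme (I : finType) (A : Type) (rho : I -> A -> A) : Prop :=
  forall a b : A, exists w : seq I, rho_word rho w a = b.

(* sigma_i^a(alpha_j) = alpha_j - c^a_{ij} alpha_i, extended Z-linearly *)
Definition sigma (I : finType) (A : Type) (C : A -> I -> I -> int)
    (i : I) (a : A) (v : {ffun I -> int}) : {ffun I -> int} :=
  [ffun k => v k - ((k == i) : nat)%:Z * (\sum_(j : I) C a i j * v j)].

Definition card_eq (T : eqType) (P : T -> Prop) (n : nat) : Prop :=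
  exists s : seq T, uniq s /\ size s = n /\ (forall x, P x <-> x \in s).

Definition m_set (I : finType) (A : Type) (R : A -> {ffun I -> int} -> Prop)
    (a : A) (i j : I) (v : {ffun I -> int}) : Prop :=
  R a v /\ exists p q : nat, v = [ffun k => p%:Z * alpha i k + q%:Z * alpha j k].

Definition root_system (I : finType) (A : Type) (rho : I -> A -> A)
    (C : A -> I -> I -> int) (R : A -> {ffun I -> int} -> Prop) : Prop :=
  (forall a v, R a v <-> ((R a v /\ nonneg_vec v) \/
                          (R a (vopp v) /\ nonneg_vec (vopp v)))) /\
  (forall a i (z : int), R a [ffun k => z * alpha i k] <-> (z = 1 \/ z = -1)) /\
  (forall a i v, R (rho i a) v <-> exists2 w, R a w & sigma C i a w = v) /\
  (forall a i j (n : nat), i != j -> card_eq (m_set R a i j) n ->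
     iter n (fun b => rho i (rho j b)) a = a).

(* Main.v *)
Require Import Defs.
From mathcomp Require Import all_boot all_order all_algebra.
From mathcomp Require Import zify.
Set Implicit Arguments. Unset Strict Implicit. Unset Printing Implicit Defensive.
Import Order.TTheory GRing.Theory Num.Theory.
Local Open Scope ring_scope.

Definition W (I : finType) (l i j : I) (x p q : int) : {ffun I -> int} :=
  [ffun k => x * alpha l k + p * alpha i k + q * alpha j k].

Lemma WE (I : finType) (l i j : I) x p q k :
  W l i j x p q k = x * ((k == l) : nat)%:Z + p * ((k == i) : nat)%:Z + q * ((k == j) : nat)%:Z.
Proof. by rewrite /W /alpha !ffunE. Qed.

Lemma sum_delta (I : finType) (F : I -> int) l :
  \sum_(m : I) F m * ((m == l) : nat)%:Z = F l.
Proof.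
rewrite (bigD1 l) //= eqxx mulr1 big1 ?addr0 // => m /negbTE ->; by rewrite mulr0.
Qed.

Lemma sigmaW (I : finType) (A : Type) (C : A -> I -> I -> int) (b : A) (l i j : I) x p q :
  sigma C i b (W l i j x p q) =
  W l i j x (p - (x * C b i l + p * C b i i + q * C b i j)) q.
Proof.
apply/ffunP => k; rewrite /sigma ffunE !WE.
have -> : \sum_(m : I) C b i m * W l i j x p q m = x * C b i l + p * C b i i + q * C b i j.
  under eq_bigr => m _ do rewrite WE !mulrDr.
  rewrite !big_split /=.
  rewrite -[x * _](mulrC) -[p * _](mulrC) -[q * C b i j](mulrC) -(sum_delta (fun m => C b i m * x) l) -(sum_delta (fun m => C b i m * p) i)
     -(sum_delta (fun m => C b i m * q) j).
  by congr (_ + _ + _); apply: eq_bigr => m _; rewrite mulrA.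
rewrite mulrBl; lia.
Qed.

Lemma Wswap (I : finType) (l i j : I) x p q : W l i j x p q = W l j i x q p.
Proof. apply/ffunP => k; rewrite !WE; lia. Qed.


Lemma Rw (I : finType) (A : Type) (R : A -> {ffun I -> int} -> Prop) b (l i j : I) x p q x' p' q' :
  R b (W l i j x p q) -> x = x' -> p = p' -> q = q' -> R b (W l i j x' p' q').
Proof. by move=> H <- <- <-. Qed.

Lemma stepW (I : finType) (A : Type) (rho : I -> A -> A)
    (C : A -> I -> I -> int) (R : A -> {ffun I -> int} -> Prop)
    (HR : root_system rho C R) b (l i j : I) x p q :
  R b (W l i j x p q) ->
  R (rho i b) (W l i j x (p - (x * C b i l + p * C b i i + q * C b i j)) q).
Proof.
move=> Hb; case: HR => _ [_ [H3 _]]; apply/H3; exists (W l i j x p q) => //.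
exact: sigmaW.
Qed.

Lemma stepWj (I : finType) (A : Type) (rho : I -> A -> A)
    (C : A -> I -> I -> int) (R : A -> {ffun I -> int} -> Prop)
    (HR : root_system rho C R) b (l i j : I) x p q :
  R b (W l i j x p q) ->
  R (rho j b) (W l i j x p (q - (x * C b j l + p * C b j i + q * C b j j))).
Proof.
rewrite Wswap [W l i j x p _]Wswap => /(stepW HR) H; apply: Rw H _ _ _ => //; lia.
Qed.

Lemma posR (I : finType) (A : Type) (rho : I -> A -> A)
    (C : A -> I -> I -> int) (R : A -> {ffun I -> int} -> Prop)
    (HR : root_system rho C R) b v (k : I) :
  R b v -> 0 < v k -> forall k', 0 <= v k'.
Proof.
case: HR => [H1 _] Hv Hk k'; case: (H1 b v) => /(_ Hv) [[_ Hn] //|[_ Hn]] _.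
by have := Hn k; rewrite /vopp ffunE; lia.
Qed.

Lemma R2W (I : finType) (A : Type) (rho : I -> A -> A)
    (C : A -> I -> I -> int) (R : A -> {ffun I -> int} -> Prop)
    (HR : root_system rho C R) b (l i j : I) z :
  R b (W l i j 0 z 0) <-> z = 1 \/ z = -1.
Proof.
case: HR => [_ [H2 _]].
suff -> : W l i j 0 z 0 = [ffun k => z * alpha i k] by exact: H2.
by apply/ffunP => k; rewrite WE /alpha !ffunE; lia.
Qed.

Lemma R2Wj (I : finType) (A : Type) (rho : I -> A -> A)
    (C : A -> I -> I -> int) (R : A -> {ffun I -> int} -> Prop)
    (HR : root_system rho C R) b (l i j : I) z :
  R b (W l i j 0 0 z) <-> z = 1 \/ z = -1.
Proof. rewrite Wswap; exact: (R2W HR). Qed.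

Lemma R2Wl (I : finType) (A : Type) (rho : I -> A -> A)
    (C : A -> I -> I -> int) (R : A -> {ffun I -> int} -> Prop)
    (HR : root_system rho C R) b (l i j : I) :
  R b (W l i j 1 0 0).
Proof.
case: HR => [_ [H2 _]]; have := proj2 (H2 b l 1) (or_introl erefl).
suff -> : W l i j 1 0 0 = [ffun k => 1 * alpha l k] by [].
by apply/ffunP => k; rewrite WE /alpha !ffunE; lia.
Qed.

Lemma msetW (I : finType) (A : Type) (R : A -> {ffun I -> int} -> Prop) b (i j : I) v :
  m_set R b i j v <-> R b v /\ exists p q : int, [/\ 0 <= p, 0 <= q & v = W i i j 0 p q].
Proof.
rewrite /m_set; split=> [[Hv [p [q E]]]|[Hv [p [q [hp hq E]]]]]; split => //.
  exists p%:Z, q%:Z; split => //; rewrite E; apply/ffunP => k; rewrite WE /alpha !ffunE; lia.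
exists `|p|%N, `|q|%N; rewrite E; apply/ffunP => k; rewrite WE /alpha !ffunE !gez0_abs //; lia.
Qed.

Lemma WeqE (I : finType) (i j : I) p q p' q' : i != j ->
  (W i i j 0 p q == W i i j 0 p' q') = (p == p') && (q == q').
Proof.
move=> ij; apply/eqP/andP => [E|[/eqP -> /eqP ->]] //.
have Ei := congr1 (fun f : {ffun I -> int} => f i) E; have Ej := congr1 (fun f : {ffun I -> int} => f j) E.
move: Ei Ej; rewrite /= !WE eqxx (negbTE ij) eq_sym (negbTE ij) eqxx.
by split; apply/eqP; lia.
Qed.

Lemma four (T : eqType) (s : seq T) a b c d :
  uniq s -> size s = 3%N -> a \in s -> b \in s -> c \in s -> d \in s ->
  uniq [:: a; b; c; d] -> False.
Proof.
move=> us ss ha hb hc hd u.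
have : (size [:: a; b; c; d] <= size s)%N.
  by apply: uniq_leq_size u _ => x; rewrite !inE => /or4P [] /eqP ->.
by rewrite ss.
Qed.

Lemma WEi (I : finType) (i j : I) p q : i != j -> W i i j 0 p q i = p.
Proof. move=> ij; rewrite WE eqxx (negbTE ij); lia. Qed.
Lemma WEj (I : finType) (i j : I) p q : i != j -> W i i j 0 p q j = q.
Proof. move=> ij; rewrite WE eqxx eq_sym (negbTE ij); lia. Qed.

Definition Pm (I : finType) (A : Type) (C : A -> I -> I -> int)
  (R : A -> {ffun I -> int} -> Prop) (b : A) (i j : I) : Prop :=
  C b i j = -1 /\ C b j i = -1 /\ forall p q : int, 0 <= p -> 0 <= q ->
    R b (W i i j 0 p q) -> [\/ p = 1 /\ q = 0, p = 0 /\ q = 1 | p = 1 /\ q = 1].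

Lemma rootc (I : finType) (A : Type) (rho : I -> A -> A)
    (C : A -> I -> I -> int) (R : A -> {ffun I -> int} -> Prop)
    (HC : cartan_scheme rho C) (HR : root_system rho C R) b (i j : I) :
  R b (W i i j 0 1 (- C b j i)).
Proof.
case: HC => _ [_ [_ [Hinv HC2]]].
have := (proj2 (R2W HR (rho j b) i i j 1)) (or_introl erefl).
move/(stepWj HR); rewrite Hinv -HC2 => H; apply: Rw H _ _ _ => //; lia.
Qed.

Lemma rootc' (I : finType) (A : Type) (rho : I -> A -> A)
    (C : A -> I -> I -> int) (R : A -> {ffun I -> int} -> Prop)
    (HC : cartan_scheme rho C) (HR : root_system rho C R) b (i j : I) :
  R b (W i i j 0 (- C b i j) 1).
Proof.
suff -> : W i i j 0 (- C b i j) 1 = W j j i 0 1 (- C b i j) by exact: (rootc HC HR b j i).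
by apply/ffunP => k; rewrite !WE; lia.
Qed.

Lemma base (I : finType) (A : Type) (rho : I -> A -> A)
    (C : A -> I -> I -> int) (R : A -> {ffun I -> int} -> Prop)
    (HC : cartan_scheme rho C) (HR : root_system rho C R)
    (a : A) (i j : I) (Hm : card_eq (m_set R a i j) 3) :
  i != j /\ Pm C R a i j.
Proof.
case: Hm => s [us [ss Hs]].
have memW p q : 0 <= p -> 0 <= q -> R a (W i i j 0 p q) -> W i i j 0 p q \in s.
  by move=> hp hq Rv; apply/Hs/msetW; split => //; exists p, q.
have ij : i != j.
  apply/negP => /eqP eij; subst j.
  have: (size s <= size [:: W i i i 0 1 0])%N.
    apply: uniq_leq_size us _ => v /Hs /msetW [Rv [p [q [hp hq E]]]].
    have E2 : W i i i 0 p q = W i i i 0 (p + q) 0.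
      by apply/ffunP => k; rewrite !WE; lia.
    rewrite E E2 in Rv *; case/(R2W HR): Rv => h; last lia.
    by rewrite h inE.
  by rewrite ss.
have [_ [_ [Hg [Hinv HC2]]]] := HC.
have gij := Hg a; case: gij => [g1 [g2 g3]].
have Hc0 : C a i j != 0.
  apply/eqP => c0.
  have: ~~ all (mem [:: W i i j 0 1 0; W i i j 0 0 1]) s.
    apply/negP => /allP sub; have := uniq_leq_size us sub; by rewrite ss.
  case/allPn => v /Hs /msetW [Rv [p [q [hp hq E]]]].
  rewrite E !inE !WeqE // negb_or => /andP [n1 n2].
  rewrite E in Rv.
  have q0 : q != 0.
    apply/eqP=> q0; rewrite q0 in Rv n1 n2; case/(R2W HR): Rv => h; last lia.
    by rewrite h eqxx in n1.
  have p0 : p != 0.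
    apply/eqP=> p0; rewrite p0 in Rv n1 n2; case/(R2Wj HR): Rv => h; last lia.
    by rewrite h eqxx in n2.
  have := stepW HR Rv => /(posR HR) H.
  have := H j; rewrite WEj // => /(_ ltac:(lia)) /(_ i); rewrite WEi // g1 c0; lia.
have Hd0 : C a j i != 0 by apply/eqP => /g3; apply/eqP.
have hc : C a i j <= -1 by have := g2 _ _ ij; lia.
have ji : j != i by rewrite eq_sym.
have hd : C a j i <= -1 by have := g2 _ _ ji; lia.
have r1 := memW (- C a i j) 1 ltac:(lia) ltac:(lia) (rootc' HC HR a i j).
have r2 := memW 1 (- C a j i) ltac:(lia) ltac:(lia) (rootc HC HR a i j).
have e1 := memW 1 0 ltac:(lia) ltac:(lia) ((proj2 (R2W HR a i i j 1)) (or_introl erefl)).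
have e2 := memW 0 1 ltac:(lia) ltac:(lia) ((proj2 (R2Wj HR a i i j 1)) (or_introl erefl)).
have [cij cji] : C a i j = -1 /\ C a j i = -1.
  case: (boolP ((C a i j == -1) && (C a j i == -1))) => [/andP[/eqP->/eqP->]//|h].
  exfalso; apply: (four us ss e1 e2 r1 r2).
  rewrite /= !inE !WeqE //. lia.
split => //; split => //; split => // p q hp hq Rv.
have v := memW p q hp hq Rv.
case: (boolP [|| (p == 1) && (q == 0), (p == 0) && (q == 1) | (p == 1) && (q == 1)]).
  case/or3P => /andP [/eqP -> /eqP ->]; by [constructor 1|constructor 2|constructor 3].
move=> h; exfalso; apply: (four us ss e1 e2 r1 v).
rewrite /= !inE !WeqE //. lia.
Qed.

Lemma Pm_swap (I : finType) (A : Type) (C : A -> I -> I -> int)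
  (R : A -> {ffun I -> int} -> Prop) b (i j : I) : Pm C R b i j -> Pm C R b j i.
Proof.
case=> [h1 [h2 h3]]; split => //; split => // p q hp hq Rv.
have E : W j j i 0 p q = W i i j 0 q p by apply/ffunP => k; rewrite !WE; lia.
rewrite E in Rv; case: (h3 _ _ hq hp Rv) => [[-> ->]|[-> ->]|[-> ->]];
  by [constructor 2|constructor 1|constructor 3].
Qed.

Lemma Pm_step (I : finType) (A : Type) (rho : I -> A -> A)
    (C : A -> I -> I -> int) (R : A -> {ffun I -> int} -> Prop)
    (HC : cartan_scheme rho C) (HR : root_system rho C R) b (i j : I) :
  i != j -> Pm C R b i j -> Pm C R (rho i b) i j.
Proof.
move=> ij [cij [cji mem]].
have [_ [_ [Hg [Hinv HC2]]]] := HC.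
have [g1 [g2 g3]] := Hg (rho i b).
have cij' : C (rho i b) i j = -1 by rewrite -HC2.
have ji : j != i by rewrite eq_sym.
have hd : C (rho i b) j i <= 0 by exact: g2.
have hd0 : C (rho i b) j i != 0 by apply/eqP => /g3; rewrite cij'.
have := stepW HR (rootc HC HR (rho i b) i j); rewrite Hinv g1 cij' => H.
have cji' : C (rho i b) j i = -1.
  have H' : R b (W i i j 0 (-1 - C (rho i b) j i) (- C (rho i b) j i)).
    by apply: Rw H _ _ _ => //; lia.
  have hA : 0 <= -1 - C (rho i b) j i by lia.
  have hB : 0 <= - C (rho i b) j i by lia.
  case: (mem _ _ hA hB H') => [[h1 h2]|[h1 h2]|[h1 h2]]; lia.
split => //; split => // p q hp hq Rv.
have := stepW HR Rv; rewrite Hinv g1 cij' => H2.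
case: (boolP (q == 0)) => [/eqP q0|q0].
  rewrite q0 in Rv *; case/(R2W HR): Rv => h; last lia.
  by rewrite h; constructor 1.
have := posR HR H2 (k := j); rewrite WEj // => /(_ ltac:(lia)) /(_ i); rewrite WEi // => hqp.
case: (mem _ _ hqp hq H2) => [[h1 h2]|[h1 h2]|[h1 h2]]; try lia.
  constructor 3; lia.
constructor 2; lia.
Qed.

Lemma WEl (I : finType) (l i j : I) x p q : l != i -> l != j -> W l i j x p q l = x.
Proof. move=> li lj; rewrite WE eqxx (negbTE li) (negbTE lj); lia. Qed.
Lemma WEi3 (I : finType) (l i j : I) x p q : l != i -> i != j -> W l i j x p q i = p.
Proof. move=> li ij; rewrite WE eqxx eq_sym (negbTE li) (negbTE ij); lia. Qed.
Lemma WEj3 (I : finType) (l i j : I) x p q : l != j -> i != j -> W l i j x p q j = q.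
Proof. move=> lj ij; rewrite WE eqxx eq_sym (negbTE lj) eq_sym (negbTE ij); lia. Qed.

Theorem lemma4p9 (I : finType) (A : Type) (rho : I -> A -> A)
    (C : A -> I -> I -> int) (R : A -> {ffun I -> int} -> Prop)
    (HC : cartan_scheme rho C) (Hconn : connected_scheme rho)
    (HR : root_system rho C R)
    (a : A) (i j : I) (Hm : card_eq (m_set R a i j) 3) :
  forall l : I,
    C (rho i a) i l + C (rho i a) j l = C (rho i (rho j a)) i l + C (rho i (rho j a)) j l.
Proof.
move=> l.
have [ij Pa] := base HC HR Hm.
have ji : j != i by rewrite eq_sym.
have [_ [_ [Hg [Hinv HC2]]]] := HC.
have Cii b k : C b k k = 2 by have [] := Hg b.
have E3 : iter 3 (fun b => rho i (rho j b)) a = a by have [_ [_ [_ H4]]] := HR; exact: H4.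
rewrite /= in E3.
have Hyz : rho j (rho i (rho j (rho i a))) = rho i (rho j a).
  have := congr1 (fun b => rho j (rho i b)) E3; rewrite /= !Hinv => H1.
  have := congr1 (fun b => rho j (rho i b)) H1; rewrite /= !Hinv => H2.
  by rewrite H2.
have Px := Pm_step HC HR ij Pa.
have Pt := Pm_swap (Pm_step HC HR ji (Pm_swap Px)).
have Pz := Pm_step HC HR ij Pt.
have Pja := Pm_swap (Pm_step HC HR ji (Pm_swap Pa)).
have Py := Pm_step HC HR ij Pja.
have Hzy : rho j (rho i (rho j a)) = rho i (rho j (rho i a)) by rewrite -Hyz Hinv.
case: Pa => [aij [aji _]]; case: Px => [xij [xji _]]; case: Pt => [tij [tji _]].
case: Pz => [zij [zji _]]; case: Pja => [jij [jji _]]; case: Py => [yij [yji _]].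
case: (eqVneq l i) => [->|li]; first by rewrite !Cii xji yji.
case: (eqVneq l j) => [->|lj]; first by rewrite !Cii xij yij.
have H1 := stepW HR (R2Wl HR (rho i a) l i j).
rewrite Hinv in H1.
have H2 := stepWj HR H1.
have H3 := stepW HR H2.
have H4 := stepWj HR H3. rewrite Hzy in H4.
have H5 := stepW HR H4. rewrite Hinv in H5.
have H6 := stepWj HR H5.
rewrite !Cii aji jij yji zij tji in H6.
have P6 := posR HR H6 (k := l); rewrite WEl // in P6.
have P6i := P6 ltac:(lia) i; have P6j := P6 ltac:(lia) j.
rewrite WEi3 // in P6i; rewrite WEj3 // in P6j.
have K1 := stepWj HR (R2Wl HR (rho i a) l i j).
have K2 := stepW HR K1.
have K3 := stepWj HR K2. rewrite Hyz in K3.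
have K4 := stepW HR K3.
have K5 := stepWj HR K4. rewrite Hinv in K5.
have K6 := stepW HR K5. rewrite Hinv in K6.
rewrite !Cii xji tij zji yij jji aij in K6.
have Q6 := posR HR K6 (k := l); rewrite WEl // in Q6.
have Q6i := Q6 ltac:(lia) i; have Q6j := Q6 ltac:(lia) j.
rewrite WEi3 // in Q6i; rewrite WEj3 // in Q6j.
move: P6i P6j Q6i Q6j.
rewrite -!HC2.
have e1 : C (rho i (rho j (rho i a))) j l = C (rho i (rho j a)) j l by rewrite -Hyz -HC2.
rewrite e1; lia.
Qed.
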